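(* Let $n\ge1$, $d\ge0$, let $\lambda$ be a partition and $\beta\in\mathsf{B}_n$ with $\bm{l}(\lambda)\le n$, $\bm{l}(\beta)\le n$ and $|\lambda|+|\beta|=d$, and let $\alpha$ be a composition of $d$ with at most $n$ parts. If $\bm\lambda(\alpha)$ is not dominated by $\bm\lambda(\phi(\lambda,\beta))$, then $C^{\alpha}_{\lambda,\beta}=0$.
   Context: Let $\mathbf{x}=\{x_1,\dots,x_n\}$. A composition is a finite sequence of positive integers $\beta=(\beta_1,\dots,\beta_k)$, length $\bm{l}(\beta)=k$, size $|\beta|=\sum\beta_i$; a partition is a weakly decreasing composition; $\bm\lambda(\alpha)$ is the partition obtained by sorting the parts of $\alpha$ decreasingly. A partition $\lambda$ dominates $\mu$ if $\sum_{i=1}^k\lambda_i\ge\sum_{i=1}^k\mu_i$ for all $k$. $s_\lambda(x_1,\dots,x_n)$ is the Schur polynomial. Composition tableaux: the diagram of $\alpha$ has $\alpha_i$ cells in row $i$ (from the top, cells $(i,j)$ in matrix notation); a composition tableau of shape $\alpha$ is a filling $T$ by positive integers with (CT1) rows weakly decreasing left to right; (CT2) leftmost column strictly increasing top to bottom; (CT3) for cells $(i,k),(j,k)$ with $i<j$: if $\alpha_i\ge\alpha_j$ (and $k\ge2$) then $T(j,k)<T(i,k)$ or $T(i,k-1)<T(j,k)$; if $\alpha_i<\alpha_j$ then $T(j,k)<T(i,k)$ or $T(i,k)<T(j,k+1)$. The quasisymmetric Schur polynomial is $\mathcal{S}_\alpha(x_1,\dots,x_n)=\sum_T\prod_i x_i^{\#\{\text{entries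 }=i\}}$ over composition tableaux of shape $\alpha$ with entries in $\{1,\dots,n\}$; the $\mathcal{S}_\alpha$ with $\bm{l}(\alpha)\le n$ form a basis of the ring $\mathit{QSym}_n$ of quasisymmetric polynomials in $\mathbf{x}$. $C^{\alpha}_{\lambda,\beta}$ denotes the coefficient of $\mathcal{S}_\alpha$ in the expansion of $s_\lambda\,\mathcal{S}_\beta$ in this basis. A composition $\alpha$ is inverting if for each $i$ with $1<i\le\max_j\alpha_j$ there exist $s<t$ with $\alpha_s=i$, $\alpha_t=i-1$. Writing uniquely $\alpha=\gamma\,k^{i_k}\cdots1^{i_1}$ ($i_j\ge1$, $\gamma$ containing none of $1,\dots,k$, $k\ge0$ maximal), $\alpha$ is pure if $k$ is even. $\mathsf{B}_n$ is the set of pure and inverting compositions of length at most $n$. The map $\phi$: given $\lambda,\beta$ as in the claim, if $\bm{l}(\lambda)>\bm{l}(\beta)$ append $\bm{l}(\lambda)-\bm{l}(\beta)$ zeros after the last part of $\beta$; then for $1\le i\le\bm{l}(\lambda)$ add $\lambda_i$ to the $i$-th largest part of the padded $\beta$, where parts are compared by value and if $\beta_j=\beta_k$ with $j<k$ then $\beta_j$ is considered smaller. The result is $\phi(\lambda,\beta)$. *)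

(* Defs.v *)
From HB Require Import structures.
From mathcomp Require Import all_boot all_order all_algebra.
From mathcomp Require Export mpoly.
Set Implicit Arguments. Unset Strict Implicit. Unset Printing Implicit Defensive.
Import Order.TTheory GRing.Theory Num.Theory.

Definition is_composition (a : seq nat) : bool := all (fun x => 0 < x) a.
Definition is_partition (l : seq nat) : bool :=
  is_composition l && sorted geq l.

Definition sort_dec (a : seq nat) : seq nat := sort geq a.

Definition dominates (lam mu : seq nat) : Prop :=
  forall k, sumn (take k mu) <= sumn (take k lam).

Definition inverting (a : seq nat) : Prop :=
  forall i, 1 < i -> i <= \max_(x <- a) x ->
    exists s t, [/\ s < t, t < size a, nth 0 a s = i & nth 0 a t = i.-1].

Definition stair_tail (k : nat) (ms : seq nat) : seq nat :=
  flatten [seq nseq (nth 0 ms j) (k - j) | j <- iota 0 k].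

(* alpha = gamma k^{i_k} ... 1^{i_1}, i_j >= 1, gamma contains none of 1..k *)
Definition tail_decomp (a : seq nat) (k : nat) : Prop :=
  exists gamma ms, [/\ size ms = k, all (fun m => 0 < m) ms,
    all (fun x => x \notin iota 1 k) gamma & a = gamma ++ stair_tail k ms].

Definition pure (a : seq nat) : Prop :=
  exists k, [/\ tail_decomp a k, ~~ odd k & forall k', tail_decomp a k' -> k' <= k].

Definition in_Bn (n : nat) (b : seq nat) : Prop :=
  [/\ is_composition b, size b <= n, pure b & inverting b].

Definition pad_to (m : nat) (b : seq nat) : seq nat := b ++ nseq (m - size b) 0.

(* rank (0-indexed) of position j of b in decreasing order, where among equal
   values the later position counts as larger *)
Definition rank_dec (b : seq nat) (j : nat) : nat :=
  count (fun k => (nth 0 b j < nth 0 b k) || ((nth 0 b j == nth 0 b k) && (j < k)))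
        (iota 0 (size b)).

Definition phi (lam beta : seq nat) : seq nat :=
  let b := pad_to (size lam) beta in
  [seq nth 0 b j + nth 0 lam (rank_dec b j) | j <- iota 0 (size b)].

Fixpoint words (n len : nat) : seq (seq nat) :=
  if len is len'.+1 then [seq x :: w | x <- iota 1 n, w <- words n len'] else [:: [::]].

Fixpoint fillings (n : nat) (sh : seq nat) : seq (seq (seq nat)) :=
  if sh is r :: sh' then [seq w :: T | w <- words n r, T <- fillings n sh'] else [:: [::]].

(* entry T(i,k), 0-indexed *)
Definition ent (T : seq (seq nat)) (i k : nat) : nat := nth 0 (nth [::] T i) k.

Definition is_ssyt (T : seq (seq nat)) : bool :=
  all (fun r => sorted leq r) T &&
  [forall i : 'I_(size T), forall k : 'I_(size (nth [::] T i.+1)),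
      ent T i k < ent T i.+1 k].

(* composition tableau of shape a (conditions CT1, CT2, CT3), 0-indexed *)
Definition is_ct (a : seq nat) (T : seq (seq nat)) : bool :=
  let l := size a in
  all (fun r => sorted geq r) T &&
  [forall i : 'I_l, forall j : 'I_l, (i < j) ==> (ent T i 0 < ent T j 0)] &&
  [forall i : 'I_l, forall j : 'I_l, forall k : 'I_(\max_(x <- a) x),
     ((i < j) && (k < nth 0 a i) && (k < nth 0 a j)) ==>
     (if nth 0 a j <= nth 0 a i then
        (0 < k) ==> ((ent T j k < ent T i k) || (ent T i k.-1 < ent T j k))
      else (ent T j k < ent T i k) || (ent T i k < ent T j k.+1))].

Local Open Scope ring_scope.

(* x^T, with entry e standing for the variable x_e = 'X_(e-1) *)
Definition mono (n : nat) (T : seq (seq nat)) : {mpoly rat[n]} :=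
  \prod_(i < n) 'X_i ^+ count_mem i.+1 (flatten T).

Definition schur (n : nat) (lam : seq nat) : {mpoly rat[n]} :=
  \sum_(T <- fillings n lam | is_ssyt T) mono n T.

Definition qschur (n : nat) (a : seq nat) : {mpoly rat[n]} :=
  \sum_(T <- fillings n a | is_ct a T) mono n T.

Fixpoint comps_upto (k d : nat) : seq (seq nat) :=
  if k is k'.+1 then
    (if d == 0%N then [:: [::]] else [::]) ++
    [seq p :: s | p <- iota 1 d, s <- comps_upto k' (d - p)]
  else (if d == 0%N then [:: [::]] else [::]).

(* Main.v *)
Require Import Defs.
From HB Require Import structures.
From mathcomp Require Import all_boot all_order all_algebra zify.
From mathcomp Require Import mpoly.
Set Implicit Arguments. Unset Strict Implicit. Unset Printing Implicit Defensive.

Module M2.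

Definition top (k : nat) (s : seq nat) : nat := sumn (take k (sort geq s)).

Lemma exch N (f : 'I_N -> nat) (R I : {set 'I_N}) :
  #|R| <= #|I| -> (forall i j, i \in I -> j \notin I -> f j <= f i) ->
  \sum_(j in R) f j <= \sum_(i in I) f i.
Proof.
move=> hc hf.
rewrite (big_setID I) [X in _ <= X](big_setID R) /= setIC leq_add2l.
have hc' : #|R :\: I| <= #|I :\: R|.
  move: hc; rewrite -(cardsID I R) -(cardsID R I) setIC leq_add2l //.
case: (set_0Vmem (I :\: R)) => [E|[i0 Hi0]].
  move: hc'; rewrite E cards0 leqn0 cards_eq0 => /eqP ->.
  by rewrite big_set0.
set im := [arg min_(i < i0 in I :\: R) f i].
have [Him Hmin] : im \in I :\: R /\ forall i, i \in I :\: R -> f im <= f i.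
  by rewrite /im; case: arg_minnP => // j Hj Hm; split.
apply: (@leq_trans (\sum_(j in R :\: I) f im)).
  apply: leq_sum => j; rewrite inE => /andP[hj _].
  by apply: hf hj; move: Him; rewrite inE => /andP[].
rewrite sum_nat_const.
apply: (@leq_trans (\sum_(j in I :\: R) f im)).
  by rewrite sum_nat_const leq_mul2r hc' orbT.
by apply: leq_sum => j hj; apply: Hmin.
Qed.

Lemma card_ltk N k : #|[set r : 'I_N | r < k]| = minn k N.
Proof.
rewrite cardsE -sum1_card.
rewrite -(big_mkord (fun r => r < k) (fun _ => 1)).
elim: N => [|N IH]; first by rewrite big_geq // minn0.
rewrite big_mkcond big_nat_recr //= -big_mkcond IH.
case: (ltnP N k) => h; lia.
Qed.

Lemma sum_ltk_nat N k (f : nat -> nat) :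
  \sum_(0 <= r < N | r < k) f r = \sum_(0 <= r < minn k N) f r.
Proof.
elim: N => [|N IH]; first by rewrite minn0 !big_geq.
rewrite big_mkcond big_nat_recr //= -big_mkcond IH.
case: (ltnP N k) => h.
  have -> : minn k N.+1 = (minn k N).+1 by lia.
  have e : minn k N = N by lia.
  by rewrite big_nat_recr //= e.
have e : minn k N.+1 = k by lia.
by rewrite addn0 e.
Qed.

Lemma sumn_take k t : sumn (take k t) = \sum_(0 <= r < minn k (size t)) nth 0 t r.
Proof.
rewrite sumnE (big_nth 0) size_take_min.
apply: eq_big_nat => i /andP[_ hi]; rewrite nth_take //; lia.
Qed.

Lemma sum_ltk N k t : size t = N ->
  \sum_(r in [set r : 'I_N | r < k]) nth 0 t r = sumn (take k t).
Proof.
move=> st; rewrite sumn_take st -sum_ltk_nat big_mkord.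
by apply: eq_bigl => r; rewrite inE.
Qed.

Lemma sortedE N k t (R : {set 'I_N}) : sorted geq t -> size t = N -> #|R| <= k ->
  \sum_(r in R) nth 0 t r <= sumn (take k t).
Proof.
move=> so st hR; rewrite -(sum_ltk k st).
apply: exch.
  rewrite card_ltk leq_min hR /=.
  by apply: (leq_trans (max_card _)); rewrite card_ord.
move=> i j; rewrite !inE -leqNgt => hi hj.
have := @sorted_leq_nth _ geq (fun y x z (h1 : geq x y) (h2 : geq y z) => leq_trans h2 h1) leqnn 0 t so i j.
rewrite !inE st !ltn_ord; apply => //; lia.
Qed.

Lemma sortperm s : exists sg : 'I_(size s) -> 'I_(size s),
  injective sg /\ forall i : 'I_(size s), nth 0 s i = nth 0 (sort geq s) (sg i).
Proof.
have hp : perm_eq s (sort geq s) by rewrite perm_sym perm_sort.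
have sz : size (sort geq s) = size s by rewrite size_sort.
case/(perm_iotaP 0): hp => Is hIs hs.
have szI : size Is = size s by rewrite (perm_size hIs) size_iota sz.
have ltI : forall i, i < size s -> nth 0 Is i < size s.
  move=> i hi; have : nth 0 Is i \in iota 0 (size (sort geq s)).
    by rewrite -(perm_mem hIs) mem_nth // szI.
  by rewrite mem_iota sz.
have uI : uniq Is by rewrite (perm_uniq hIs) iota_uniq.
exists (fun i : 'I_(size s) => Ordinal (ltI _ (ltn_ord i))); split.
  move=> i j /(congr1 val) /=.
  by move/eqP; rewrite nth_uniq ?szI // => /eqP/val_inj.
move=> i /=; rewrite {1}hs (nth_map 0) // szI //.
Qed.

Lemma top_ge N s k (I : {set 'I_N}) : size s = N -> #|I| <= k ->
  \sum_(i in I) nth 0 s i <= top k s.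
Proof.
move=> st; move: I; rewrite -st => I hI.
case: (sortperm s) => sg [sgi hsg].
rewrite (eq_bigr (fun i => nth 0 (sort geq s) (sg i))); last by move=> i _; rewrite hsg.
rewrite -(big_imset (fun r : 'I_(size s) => nth 0 (sort geq s) r)) /=; last by move=> x y _ _; apply: sgi.
apply: sortedE; first by apply: sort_sorted => a b; apply: leq_total.
  by rewrite size_sort.
by rewrite card_imset.
Qed.

Lemma top_att N s k : size s = N ->
  exists J : {set 'I_N}, #|J| <= k /\ \sum_(i in J) nth 0 s i = top k s.
Proof.
move=> st; rewrite -st.
case: (sortperm s) => sg [sgi hsg].
exists (sg @^-1: [set r : 'I_(size s) | r < k]); split.
  rewrite card_preimset // card_ltk; lia.
rewrite (eq_bigr (fun i => nth 0 (sort geq s) (sg i))); last by move=> i _; rewrite hsg.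
rewrite /top -(@sum_ltk (size s)) ?size_sort //.
rewrite [RHS](reindex_inj sgi) /=.
by apply: eq_bigl => i; rewrite !inE.
Qed.

End M2.
Import M2.

Module M3.

Lemma geq_trans : transitive geq.
Proof. by move=> y x z h1 h2; apply: leq_trans h2 h1. Qed.
Lemma geq_total : total geq.
Proof. by move=> a b; apply: leq_total. Qed.
Lemma geq_anti : antisymmetric geq.
Proof. by move=> a b /andP[h1 h2]; apply/eqP; rewrite eqn_leq; apply/andP; split. Qed.

Lemma top_sorted k s : sorted geq s -> top k s = sumn (take k s).
Proof. by move=> so; rewrite /top sorted_sort //; apply: geq_trans. Qed.

Lemma top_pad k z s : top k (nseq z 0 ++ s) = top k s.
Proof.
have e : sort geq (nseq z 0 ++ s) = sort geq s ++ nseq z 0.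
  rewrite -[RHS](sorted_sort geq_trans).
    apply/perm_sortP; [exact: geq_total|exact: geq_trans|exact: geq_anti|].
    by rewrite perm_catC perm_cat2r perm_sym perm_sort.
  rewrite sorted_pairwise; last exact: geq_trans.
  rewrite pairwise_cat -sorted_pairwise; last exact: geq_trans.
  rewrite sort_sorted; last exact: geq_total.
  apply/and3P; split => //.
    by apply/allrelP => x y _; rewrite mem_nseq => /andP[_ /eqP ->].
  rewrite -sorted_pairwise; last exact: geq_trans.
  by elim: z => //= -[|z] //.
rewrite /top e take_cat; case: ltnP => // h.
have z0 : forall m z, sumn (take m (nseq z 0)) = 0 by move=> m z'; elim: z' m => [|z' IH] [|m] //=; rewrite IH.
by rewrite sumn_cat z0 addn0 take_oversize.
Qed.

Lemma count_nth (a : pred nat) s :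
  count a s = \sum_(i < size s) a (nth 0 s i).
Proof.
rewrite -sum1_count (big_nth 0) big_mkcond /= big_mkord.
by apply: eq_bigr => i _; case: (a _).
Qed.

Lemma sum_lt_min M x : \sum_(c < M) (c < x) = minn x M.
Proof.
elim: M => [|M IH]; first by rewrite big_ord0 minn0.
rewrite big_ord_recr /= IH; case: (ltnP M x) => h /=; lia.
Qed.

Lemma sum_lt_x M x : x <= M -> \sum_(c < M) (c < x) = x.
Proof. by move=> hx; rewrite sum_lt_min; lia. Qed.

Lemma sum_count_lt M u : all (fun x => x <= M) u ->
  \sum_(c < M) count (fun x => c < x) u = sumn u.
Proof.
elim: u => [|x u IH] /=; first by rewrite big1.
move=> /andP[hx hu]; rewrite big_split /= IH // sum_lt_x //.
Qed.

Lemma min_count_sorted c k t : sorted geq t ->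
  minn k (count (fun x => c < x) t) = count (fun x => c < x) (take k t).
Proof.
elim: t k => [|x t IH] k /=; first by rewrite minn0.
move=> so.
have so' : sorted geq t by apply: path_sorted so.
case: k => [|k] /=; first by rewrite min0n.
case: (ltnP c x) => hcx /=.
  by rewrite -IH // add1n minnSS.
have -> : count (fun x0 => c < x0) t = 0.
  apply/eqP; rewrite -leqn0 leqNgt -has_count; apply/hasP => -[y hy hcy].
  have : geq x y.
    move: so; rewrite (path_sortedE geq_trans) => /andP[/allP al _].
    exact: al.
  rewrite /geq => hyx; have := leq_trans hcy hyx; lia.
rewrite minn0; apply/esym/eqP; rewrite -leqn0 leqNgt -has_count; apply/hasP => -[y hy hcy].
have : geq x y.
  move: so; rewrite (path_sortedE geq_trans) => /andP[/allP al _].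
  by apply: al; apply: mem_take hy.
rewrite /geq => hyx; have := leq_trans hcy hyx; lia.
Qed.

Lemma elem_le_sumn x s : x \in s -> x <= sumn s.
Proof.
elim: s => //= y s IH; rewrite inE => /orP[/eqP ->|h]; first exact: leq_addr.
by apply: leq_trans (IH h) _; apply: leq_addl.
Qed.

Lemma sum_min_top k sh :
  \sum_(c < sumn sh) minn k (count (fun x => c < x) sh) = top k sh.
Proof.
rewrite /top -[RHS](@sum_count_lt (sumn sh)).
  apply: eq_bigr => c _; rewrite -min_count_sorted; last by apply: sort_sorted; apply: geq_total.
  by congr minn; apply/permP; rewrite perm_sym perm_sort.
apply/allP => x hx; apply: elem_le_sumn.
have : x \in sort geq sh by apply: mem_take hx.
by rewrite mem_sort.
Qed.

End M3.
Import M3.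

Module M4.

Definition coldist (sh : seq nat) (T : seq (seq nat)) := forall i j c,
  i < j -> j < size sh -> c < nth 0 sh i -> c < nth 0 sh j -> ent T i c != ent T j c.

Lemma nth_le_sumn s i : nth 0 s i <= sumn s.
Proof.
case: (ltnP i (size s)) => h; first by apply: elem_le_sumn; apply: mem_nth.
by rewrite nth_default.
Qed.

Lemma colbound sh T V k : size T = size sh ->
  (forall i, i < size sh -> size (nth [::] T i) = nth 0 sh i) ->
  coldist sh T -> uniq V -> size V <= k ->
  count (mem V) (flatten T) <= top k sh.
Proof.
move=> sT rT cd uV sV.
have e1 : count (mem V) (flatten T) =
   \sum_(i < size sh) \sum_(c < sumn sh) ((c < nth 0 sh i) && (ent T i c \in V)).
  rewrite count_flatten sumnE big_map (big_nth [::]) sT big_mkord.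
  apply: eq_bigr => i _; rewrite count_nth rT //.
  rewrite (big_ord_widen _ (fun c => nat_of_bool (nth 0 (nth [::] T i) c \in V)) (nth_le_sumn sh i)) big_mkcond.
  by apply: eq_bigr => c _; case: ifP.
rewrite e1 exchange_big -sum_min_top /=; apply: leq_sum => c _.
rewrite leq_min; apply/andP; split.
  set P := fun i : 'I_(size sh) => (c < nth 0 sh i) && (ent T i c \in V).
  have -> : \sum_(i < size sh) P i = #|[set i | P i]|.
    rewrite -sum1_card [RHS]big_mkcond; apply: eq_bigr => i _; rewrite inE; case: (P i) => //.
  rewrite cardE; apply: leq_trans sV.
  rewrite -(size_map (fun i : 'I_(size sh) => ent T i c)).
  apply: uniq_leq_size.
    rewrite map_inj_in_uniq ?enum_uniq //.
    move=> i j; rewrite !mem_enum !inE /P => /andP[hi _] /andP[hj _] e.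
    apply/val_inj/eqP; case: (ltngtP i j) => // h.
      by have := cd i j c h (ltn_ord j) hi hj; rewrite e eqxx.
    by have := cd j i c h (ltn_ord i) hj hi; rewrite e eqxx.
  move=> x /mapP[i]; rewrite mem_enum inE /P => /andP[_ h] ->; exact: h.
rewrite count_nth; apply: leq_sum => i _.
by case: (c < _); case: (_ \in _).
Qed.

End M4.
Import M4.

Module M5.

Definition okw n (w : seq nat) := all (fun x => 0 < x <= n) w.

Lemma mem_words n len w : (w \in words n len) = (size w == len) && okw n w.
Proof.
elim: len w => [|len IH] w /=.
  by rewrite inE; case: w.
apply/allpairsP/idP.
  case=> -[x w'] /= [hx hw ->]; rewrite /okw /= eqSS -/(okw n w').
  move: hw hx; rewrite IH mem_iota => /andP[-> ->] /andP[h1 h2] /=; rewrite andbT; apply/andP; split; lia.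
case: w => // x w; rewrite /okw /= eqSS => /andP[hs /andP[hx hw]].
exists (x, w); split => //=; last by rewrite IH hs.
by rewrite mem_iota; case/andP: hx => h1 h2; apply/andP; split; lia.
Qed.

Definition fill_ok n (sh : seq nat) (T : seq (seq nat)) :=
  all2 (fun w r => (size w == r) && okw n w) T sh.

Lemma mem_fillings n sh T : (T \in fillings n sh) = fill_ok n sh T.
Proof.
elim: sh T => [|r sh IH] T /=.
  by rewrite inE; case: T.
apply/allpairsP/idP.
  by case=> -[w T'] /= [hw hT ->]; rewrite /fill_ok /= -/(fill_ok n sh T') -IH hT andbT -mem_words.
case: T => // w T; rewrite /fill_ok /= -/(fill_ok n sh T) => /andP[hw hT].
by exists (w, T) => /=; split => //; [rewrite mem_words | rewrite IH].
Qed.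

Lemma fill_size n sh T : fill_ok n sh T -> size T = size sh.
Proof.
elim: sh T => [|r sh IH] [|w T] //=; rewrite /fill_ok /= -/(fill_ok n sh T).
by case/andP=> _ /IH ->.
Qed.

Lemma fill_row n sh T i : fill_ok n sh T -> i < size sh ->
  size (nth [::] T i) = nth 0 sh i /\ okw n (nth [::] T i).
Proof.
elim: sh T i => [|r sh IH] [|w T] [|i] //=; rewrite /fill_ok /= -/(fill_ok n sh T).
  by case/andP=> /andP[/eqP -> ->].
by case/andP=> _ h hi; apply: IH.
Qed.

Lemma fill_flat n sh T : fill_ok n sh T -> okw n (flatten T).
Proof.
elim: sh T => [|r sh IH] [|w T] //=; rewrite /fill_ok /= -/(fill_ok n sh T).
case/andP=> /andP[_ h1] h2; move: h1; rewrite /okw all_cat => -> /=; exact: IH.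
Qed.

Lemma rowmono (r : seq nat) c' c : sorted geq r -> c' <= c -> nth 0 r c <= nth 0 r c'.
Proof.
move=> so hc; case: (ltnP c (size r)) => h; last by rewrite nth_default.
have := @sorted_leq_nth _ geq geq_trans leqnn 0 r so c' c.
by rewrite !inE h; apply => //; apply: leq_ltn_trans h.
Qed.

Lemma ssyt_coldist n lam T : sorted geq lam -> fill_ok n lam T -> is_ssyt T ->
  coldist lam T.
Proof.
move=> slam fo /andP[_ /forallP hs] i j c hij hj hci hcj.
have sT := fill_size fo.
have lamge : forall i', i' <= j -> c < nth 0 lam i'.
  move=> i' hi'; apply: leq_trans hcj _.
  have := @sorted_leq_nth _ geq geq_trans leqnn 0 lam slam i' j.
  by rewrite !inE hj; apply => //; apply: leq_ltn_trans hj.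
have adj : forall i', i'.+1 <= j -> ent T i' c < ent T i'.+1 c.
  move=> i' hi'.
  have hi'T : i' < size T by rewrite sT; lia.
  have hc : c < size (nth [::] T i'.+1).
    have hl : i'.+1 < size lam by lia.
    by rewrite (proj1 (fill_row fo hl)) lamge.
  exact: (forallP (hs (Ordinal hi'T)) (Ordinal hc)).
suff : forall m, i + m.+1 <= j -> ent T i c < ent T (i + m.+1) c.
  move/(_ (j - i).-1); rewrite (_ : i + (j - i).-1.+1 = j); last lia.
  by move/(_ (leqnn _)) => h; rewrite neq_ltn h.
elim=> [|m IH] hm. rewrite addn1. have := adj i. move=> h. apply: h. lia.
apply: ltn_trans (IH _) _; first lia.
by rewrite !addnS; apply: adj; lia.
Qed.

Lemma sorted_nseq_geq m v : sorted geq (nseq m v).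
Proof. by elim: m => [|[|m] IH] //=; rewrite leqnn. Qed.

End M5.
Import M5.

Module M6.

Lemma ct_rows a T : is_ct a T -> all (sorted geq) T.
Proof. by case/andP=> /andP[]. Qed.

Lemma ct_col0 a T i j : is_ct a T -> i < j -> j < size a -> ent T i 0 < ent T j 0.
Proof.
case/andP=> /andP[_ /forallP h2] _ hij hj.
have hi : i < size a by lia.
by have := forallP (h2 (Ordinal hi)) (Ordinal hj); move/implyP; apply.
Qed.

Lemma row_sorted a T i : is_ct a T -> sorted geq (nth [::] T i).
Proof.
move/ct_rows => /allP h; case: (ltnP i (size T)) => hi.
  by apply: h; apply: mem_nth.
by rewrite nth_default.
Qed.

Lemma ct_coldist n a T : fill_ok n a T -> is_ct a T -> coldist a T.
Proof.
move=> fo hct i j c hij hj hci hcj.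
case: c hci hcj => [|c] hci hcj.
  by rewrite neq_ltn (ct_col0 hct hij hj).
move: (hct) => /andP[_ /forallP h3].
have hi : i < size a by lia.
have hk : c.+1 < \max_(x <- a) x.
  apply: leq_trans hci _; apply: (@leq_bigmax_seq _ _ xpredT (fun x => x)) => //.
  exact: mem_nth.
have := forallP (forallP (h3 (Ordinal hi)) (Ordinal hj)) (Ordinal hk).
rewrite /= hij hci hcj /=.
apply: contraL => /eqP e.
have ri := row_sorted i hct; have rj := row_sorted j hct.
case: ifP => _.
  rewrite -e ltnn /= -leqNgt; exact: rowmono.
rewrite e ltnn /= -leqNgt; exact: rowmono.
Qed.

Definition vv n l j := n - l + j.+1.

Lemma ct_bound n a T j c : is_composition a -> fill_ok n a T -> is_ct a T ->
  j < size a -> ent T j c <= vv n (size a) j.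
Proof.
move=> ca fo hct hj.
apply: leq_trans (rowmono (row_sorted j hct) (leq0n c)) _.
suff : forall m j, j + m = (size a).-1 -> ent T j 0 + m <= n.
  move/(_ ((size a).-1 - j) j); rewrite /vv /ent => h; have := h (ltac:(lia)); lia.
elim=> [|m IH] j' hm.
  rewrite addn0; have hl : j' < size a by lia.
  have [hs ok] := fill_row fo hl.
  have hpos : 0 < nth 0 a j' by move/allP: ca; apply; apply: mem_nth.
  have : ent T j' 0 \in nth [::] T j' by apply: mem_nth; rewrite hs.
  by move/allP: ok => h /h /andP[_ ->].
have := ct_col0 hct (ltnSn j') (_ : j'.+1 < size a).
have := IH j'.+1 (_ : j'.+1 + m = (size a).-1).
lia.
Qed.

End M6.
Import M6.

Module M7.

Definition Can n (b : seq nat) : seq (seq nat) :=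
  [seq nseq (nth 0 b j) (vv n (size b) j) | j <- iota 0 (size b)].

Lemma size_Can n b : size (Can n b) = size b.
Proof. by rewrite size_map size_iota. Qed.

Lemma nth_Can n b j : j < size b -> nth [::] (Can n b) j = nseq (nth 0 b j) (vv n (size b) j).
Proof. by move=> hj; rewrite (nth_map 0) ?size_iota // nth_iota. Qed.

Lemma ent_Can n b j k : j < size b -> k < nth 0 b j -> ent (Can n b) j k = vv n (size b) j.
Proof. by move=> hj hk; rewrite /ent nth_Can // nth_nseq hk. Qed.

Lemma fill_ok_intro n sh T : size T = size sh ->
  (forall i, i < size sh -> size (nth [::] T i) = nth 0 sh i /\ okw n (nth [::] T i)) ->
  fill_ok n sh T.
Proof.
elim: sh T => [|r sh IH] [|w T] //= [sT] h.
rewrite /fill_ok /= -/(fill_ok n sh T).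
have [h1 h2] := h 0 isT; rewrite h1 eqxx h2 /=.
by apply: IH => // i hi; apply: (h i.+1).
Qed.

Lemma Can_fill n b : size b <= n -> fill_ok n b (Can n b).
Proof.
move=> hb; apply: fill_ok_intro; first exact: size_Can.
move=> i hi; rewrite nth_Can // size_nseq; split => //.
by apply/allP => x; rewrite mem_nseq => /andP[_ /eqP ->]; rewrite /vv; apply/andP; split; lia.
Qed.

Lemma Can_ct n b : is_composition b -> size b <= n -> is_ct b (Can n b).
Proof.
move=> cb hb.
have pos : forall i, i < size b -> 0 < nth 0 b i.
  by move=> i hi; move/allP: cb; apply; apply: mem_nth.
apply/andP; split; [apply/andP; split|].
- apply/allP => r /mapP[j _ ->].
  exact: sorted_nseq_geq.
- apply/forallP => i; apply/forallP => j; apply/implyP => hij.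
  rewrite !ent_Can ?pos //= /vv; lia.
- apply/forallP => i; apply/forallP => j; apply/forallP => k; apply/implyP.
  move=> /andP[/andP[hij hki] hkj].
  rewrite (ent_Can _ (ltn_ord i) hki) (ent_Can _ (ltn_ord j) hkj).
  have vlt : vv n (size b) i < vv n (size b) j by rewrite /vv; lia.
  case: ifP => h.
    apply/implyP => hk; rewrite ent_Can //; first by rewrite vlt orbT.
    lia.
  by rewrite ent_Can ?vlt ?orbT //; lia.
Qed.

End M7.
Import M7.

Module M8.

Lemma row_le v r : all (fun x => x <= v) r -> sumn r <= size r * v.
Proof. by elim: r => //= x r IH /andP[h1 /IH h2]; rewrite mulSn; apply: leq_add. Qed.

Lemma row_eq v r : all (fun x => x <= v) r -> size r * v <= sumn r -> r = nseq (size r) v.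
Proof.
elim: r => //= x r IH /andP[h1 h2] h3.
have h4 := row_le h2.
rewrite mulSn in h3.
have ex : x = v by lia.
by rewrite ex -IH //; lia.
Qed.

Lemma sumn_rows (U : seq (seq nat)) :
  sumn (flatten U) = \sum_(j < size U) sumn (nth [::] U j).
Proof. by rewrite sumn_flatten sumnE big_map (big_nth [::]) big_mkord. Qed.

Lemma ct_sum n b U : is_composition b -> size b <= n -> fill_ok n b U -> is_ct b U ->
  sumn (flatten U) <= sumn (flatten (Can n b)) /\
  (sumn (flatten (Can n b)) <= sumn (flatten U) -> U = Can n b).
Proof.
move=> cb hb fo hct.
have sU := fill_size fo.
have le : forall j, j < size b -> all (fun x => x <= vv n (size b) j) (nth [::] U j).
  move=> j hj; apply/(all_nthP 0) => c hc; exact: (ct_bound c cb fo hct hj).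
have rs : forall j, j < size b -> size (nth [::] U j) = nth 0 b j.
  by move=> j hj; have [] := fill_row fo hj.
have e1 : sumn (flatten (Can n b)) = \sum_(j < size b) nth 0 b j * vv n (size b) j.
  rewrite sumn_rows size_Can; apply: eq_bigr => j _.
  by rewrite nth_Can // sumn_nseq mulnC.
have e2 := sumn_rows U; rewrite sU in e2.
have lej : forall j : 'I_(size b), sumn (nth [::] U j) <= nth 0 b j * vv n (size b) j.
  by move=> j; rewrite -(rs j (ltn_ord j)); apply: row_le; apply: le.
split; first by rewrite e1 e2; apply: leq_sum => j _; apply: lej.
move=> hge.
have eqj : forall j : 'I_(size b), sumn (nth [::] U j) = nth 0 b j * vv n (size b) j.
  move=> j; apply/eqP; rewrite eqn_leq lej /=; rewrite leqNgt; apply/negP => hlt.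
  move: hge; rewrite e1 e2 (bigD1 j) //= [X in _ <= X](bigD1 j) //= => hge.
  have : \sum_(i < size b | i != j) sumn (nth [::] U i) <= \sum_(i < size b | i != j) nth 0 b i * vv n (size b) i.
    by apply: leq_sum => i _; apply: lej.
  by move=> h; have := leq_trans hge (leq_add (leqnn _) h); rewrite leq_add2r leqNgt hlt.
apply: (@eq_from_nth _ [::]); first by rewrite size_Can.
move=> j; rewrite sU => hj.
rewrite nth_Can // -(rs j hj); apply: row_eq; first exact: le.
by rewrite (rs j hj); have := eqj (Ordinal hj); rewrite /= => ->.
Qed.

Lemma sumn_key n s : okw n s -> sumn s = \sum_(i < n) i.+1 * count_mem i.+1 s.
Proof.
elim: s => [|x s IH]; first by rewrite /= big1 // => i _; rewrite muln0.
case/andP=> /andP[h1 h2] hs; have -> : sumn (x :: s) = x + sumn s by [].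
rewrite (IH hs).
have hx : x.-1 < n by lia.
rewrite [RHS](eq_bigr (fun i : 'I_n => i.+1 * (x == i.+1) + i.+1 * count_mem i.+1 s)); last first.
  by move=> i _; rewrite -mulnDr.
rewrite [RHS]big_split; congr (_ + _).
rewrite (bigD1 (Ordinal hx)) //= big1 ?addn0.
  by rewrite (_ : x.-1.+1 = x) ?eqxx ?muln1 //; lia.
move=> i /eqP hi; rewrite (_ : (x == i.+1) = false) ?muln0 //.
apply/negbTE/eqP => e; apply: hi; apply/val_inj => /=; lia.
Qed.

Lemma cnt_Can n b i : size b <= n -> i < n ->
  count_mem i.+1 (flatten (Can n b)) = nth 0 (nseq (n - size b) 0 ++ b) i.
Proof.
move=> hb hi.
rewrite count_flatten sumnE big_map /Can big_map.
rewrite (eq_bigr (fun j => (n - size b + j == i) * nth 0 b j)); last first.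
  move=> j _; rewrite count_nseq /= /vv; congr (_ * _).
  by case: eqP; case: eqP => // *; lia.
rewrite nth_cat size_nseq.
case: ltnP => h.
  by rewrite nth_nseq h big1_seq // => j _; rewrite (_ : (_ == i) = false) //; apply/negbTE/eqP; lia.
have hj : i - (n - size b) \in iota 0 (size b) by rewrite mem_iota; lia.
rewrite (bigD1_seq _ hj (iota_uniq _ _)) /= big1_seq.
  by rewrite addn0 (_ : (_ == i) = true) ?mul1n //; apply/eqP; lia.
move=> j /andP[hne _]; rewrite (_ : (_ == i) = false) //; apply/negbTE/eqP => e.
by move/eqP: hne; apply; lia.
Qed.

End M8.
Import M8.

Module M9.

Lemma count_le_in (T : eqType) (a b : pred T) s :
  (forall x, x \in s -> a x -> b x) -> count a s <= count b s.
Proof.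
elim: s => //= y s IH h.
have h1 : forall x, x \in s -> a x -> b x by move=> z hz; apply: h; rewrite inE hz orbT.
apply: leq_add (IH h1); case ha: (a y) => //; by rewrite (h y (mem_head _ _) ha).
Qed.

Lemma count_lt_sub (T : eqType) (a b : pred T) s :
  (forall x, x \in s -> a x -> b x) -> (exists2 x, x \in s & b x && ~~ a x) ->
  count a s < count b s.
Proof.
elim: s => [|y s IH] hab [x]; first by [].
rewrite inE => /orP[/eqP -> | hx] hb /=.
  case/andP: hb => -> /negbTE ->; rewrite add0n add1n ltnS.
  by apply: count_le_in => z hz; apply: hab; rewrite inE hz orbT.
have h1 : forall x, x \in s -> a x -> b x by move=> z hz; apply: hab; rewrite inE hz orbT.
have := IH h1 (ex_intro2 _ _ x hx hb).
case ha: (a y); first by rewrite (hab y (mem_head _ _) ha) !add1n ltnS.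
by case: (b y) => /=; lia.
Qed.

Section Rank.
Variable b : seq nat.
Let N := size b.
Definition above j k := (nth 0 b j < nth 0 b k) || ((nth 0 b j == nth 0 b k) && (j < k)).
Definition rk j := count (above j) (iota 0 N).

Lemma rk_rank j : rk j = rank_dec b j.
Proof. by []. Qed.

Lemma above_irr j : above j j = false.
Proof. by rewrite /above ltnn eqxx ltnn. Qed.

Lemma above_trans i j k : above i j -> above j k -> above i k.
Proof.
rewrite /above => /orP[h1|/andP[/eqP e1 h1]] /orP[h2|/andP[/eqP e2 h2]].
- by rewrite (ltn_trans h1 h2).
- by rewrite -e2 h1.
- by rewrite e1 h2.
- by rewrite e1 e2 eqxx (ltn_trans h1 h2) orbT.
Qed.

Lemma above_total j k : j != k -> above j k || above k j.
Proof.
rewrite /above => hjk.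
case: (ltngtP (nth 0 b j) (nth 0 b k)) => //= e.
by rewrite neq_ltn in hjk.
Qed.

Lemma rk_lt j : j < N -> rk j < N.
Proof.
move=> hj; rewrite /rk -[X in _ < X](size_iota 0 N) -(count_predC (above j)).
rewrite -[X in X < _]addn0 ltn_add2l -has_count.
by apply/hasP; exists j; rewrite ?mem_iota //= above_irr.
Qed.

Lemma rk_above j k : above j k -> k < N -> rk k < rk j.
Proof.
move=> hjk hk; apply: count_lt_sub.
  by move=> x _ h; apply: above_trans hjk h.
by exists k; rewrite ?mem_iota ?hjk ?above_irr.
Qed.

Definition rko (j : 'I_N) : 'I_N := Ordinal (rk_lt (ltn_ord j)).

Lemma rko_inj : injective rko.
Proof.
move=> j k /(congr1 val) /= e; apply/val_inj/eqP; apply/negP => /negP hne.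
case/orP: (above_total hne) => h.
  by have := rk_above h (ltn_ord k); rewrite e ltnn.
by have := rk_above h (ltn_ord j); rewrite e ltnn.
Qed.

Lemma rk_ge i j : j < N -> rk i < rk j -> nth 0 b j <= nth 0 b i.
Proof.
move=> hj hr.
have hne : i != j by apply/eqP => e; rewrite e ltnn in hr.
case/orP: (above_total hne) => h.
  by have := rk_above h hj; lia.
by move: h; rewrite /above => /orP[/ltnW //|/andP[/eqP -> _]].
Qed.
End Rank.

Lemma z0sum m z : sumn (take m (nseq z 0)) = 0.
Proof. by elim: z m => [|z IH] [|m] //=; rewrite IH. Qed.

Lemma phi_top lam beta k : sumn (take k lam) + top k beta <= top k (phi lam beta).
Proof.
set b := pad_to (size lam) beta.
have sb : size b = size beta + (size lam - size beta) by rewrite size_cat size_nseq.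
set N := size b.
have nb : forall j, j < size beta -> nth 0 b j = nth 0 beta j.
  by move=> j hj; rewrite nth_cat hj.
have sphi : size (phi lam beta) = N by rewrite size_map size_iota.
have nphi : forall j, j < N -> nth 0 (phi lam beta) j = nth 0 b j + nth 0 lam (rk b j).
  by move=> j hj; rewrite (nth_map 0) ?size_iota // nth_iota.
pose I := @rko b @^-1: [set r : 'I_N | r < k].
have cI : #|I| = minn k N by rewrite card_preimset ?card_ltk //; apply: rko_inj.
have A : \sum_(j in I) nth 0 lam (rk b j) = sumn (take k lam).
  pose l2 := lam ++ nseq (N - size lam) 0.
  have sl2 : size l2 = N by rewrite size_cat size_nseq; rewrite /N sb; lia.
  have -> : sumn (take k lam) = sumn (take k l2).
    rewrite /l2 take_cat; case: ltnP => // h.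
    by rewrite sumn_cat z0sum addn0 take_oversize.
  rewrite -(sum_ltk k sl2) [RHS](reindex_inj (@rko_inj b)) /=.
  apply: eq_big => j; first by rewrite !inE.
  move=> _; rewrite /l2 nth_cat; case: ltnP => // h.
  by rewrite nth_nseq nth_default //; case: ifP.
have B : top k beta <= \sum_(j in I) nth 0 b j.
  case: (top_att k (erefl (size beta))) => J [hJ eJ]; rewrite -eJ.
  have hw : size beta <= N by rewrite /N sb leq_addr.
  rewrite (eq_bigr (fun j : 'I_(size beta) => nth 0 b (widen_ord hw j))); last first.
    by move=> j _; rewrite /= nb.
  have -> : \sum_(i in J) nth 0 b (widen_ord hw i) = \sum_(j in widen_ord hw @: J) nth 0 b j.
    by rewrite big_imset //= => x y _ _ /(congr1 val) /= e; apply: val_inj.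
  apply: exch.
    rewrite cI card_imset; last by move=> x y /(congr1 val) /= e; apply: val_inj.
    rewrite leq_min hJ /=; apply: leq_trans (max_card _) _; by rewrite card_ord.
  move=> i j; rewrite !inE /= => hi hj.
  apply: rk_ge => //; rewrite -leqNgt in hj; exact: leq_trans hi hj.
have C : \sum_(j in I) nth 0 (phi lam beta) j <= top k (phi lam beta).
  by apply: top_ge => //; rewrite cI geq_minl.
have D : \sum_(j in I) nth 0 (phi lam beta) j = \sum_(j in I) nth 0 b j + \sum_(j in I) nth 0 lam (rk b j).
  by rewrite -big_split; apply: eq_bigr => j _; rewrite nphi.
lia.
Qed.

End M9.
Import M9.

Module M10.
Import GRing.Theory.

Lemma mem_comps k d a : is_composition a -> sumn a = d -> (size a <= k)%N ->
  a \in comps_upto k d.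
Proof.
elim: k d a => [|k IH] d a ca sa hk.
  by case: a ca sa hk => // _ <- _.
rewrite /= mem_cat; case: a ca sa hk => [|p s] ca sa hk.
  by rewrite -sa.
apply/orP; right; apply/allpairsPdep.
case/andP: ca => hp cs.
exists p, s; split => //.
  by rewrite mem_iota -sa /=; apply/andP; split; lia.
by apply: IH => //; rewrite -sa /=; lia.
Qed.

Lemma comps_mem k d a : a \in comps_upto k d ->
  [/\ is_composition a, sumn a = d & (size a <= k)%N].
Proof.
elim: k d a => [|k IH] d a /=.
  by case: (d =P 0) => [->|_] //=; rewrite mem_seq1 => /eqP ->.
rewrite mem_cat => /orP[|].
  by case: (d =P 0) => [->|_] //=; rewrite mem_seq1 => /eqP ->.
case/allpairsPdep => p [s [hp hs ->]].
have [cs ss ks] := IH _ _ hs.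
move: hp; rewrite mem_iota => /andP[h1 h2].
split => //=; [by rewrite cs andbT | lia].
Qed.

Local Open Scope ring_scope.

Lemma mcoeff_sum n (m : 'X_{1..n}) (I : Type) (r : seq I) (P : pred I) (F : I -> {mpoly rat[n]}) :
  (\sum_(i <- r | P i) F i)@_m = \sum_(i <- r | P i) (F i)@_m.
Proof. exact: (big_morph (mcoeff m) (@mcoeffD _ _ m) (mcoeff0 _ m)). Qed.

Definition cnt n (T : seq (seq nat)) : 'X_{1..n} := [multinom count_mem i.+1 (flatten T) | i < n].

Lemma mono_cnt n T : mono n T = 'X_[cnt n T].
Proof. by rewrite mpolyXE_id; apply: eq_bigr => i _; rewrite mnmE. Qed.

Lemma mcoeff_q n b m : (qschur n b)@_m =
  (count (fun U => is_ct b U && (cnt n U == m)) (fillings n b))%:R.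
Proof.
rewrite /qschur mcoeff_sum -sum1_count natr_sum big_mkcond [RHS]big_mkcond /=.
apply: eq_bigr => U _; rewrite mono_cnt mcoeffX.
by case: (is_ct b U); case: (_ == _).
Qed.

Lemma mcoeff_prod n lam beta m : (schur n lam * qschur n beta)@_m =
  \sum_(T <- fillings n lam | is_ssyt T) \sum_(U <- fillings n beta | is_ct beta U)
     (((cnt n T + cnt n U)%MM == m)%:R).
Proof.
rewrite /schur /qschur mulr_suml mcoeff_sum; apply: eq_bigr => T _.
rewrite mulr_sumr mcoeff_sum; apply: eq_bigr => U _.
by rewrite !mono_cnt -mpolyXD mcoeffX.
Qed.

End M10.
Import M10.

Module M11.

Definition pad n (a : seq nat) := nseq (n - size a) 0 ++ a.
Definition pm n a : 'X_{1..n} := [multinom nth 0 (pad n a) i | i < n].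
Definition key n a := \sum_(i < n) i.+1 * nth 0 (pad n a) i.

Lemma size_pad n a : size a <= n -> size (pad n a) = n.
Proof. by rewrite size_cat size_nseq; lia. Qed.

Lemma count_memV (V : seq nat) s : uniq V ->
  count (mem V) s = \sum_(v <- V) count_mem v s.
Proof.
move=> uV; elim: s => [|x s IH] /=; first by rewrite big1.
rewrite big_split /= -IH; congr (_ + _).
rewrite -(count_uniq_mem x uV) -sum1_count big_mkcond /=.
by apply: eq_bigr => v _; rewrite eq_sym; case: (_ == _).
Qed.

Lemma sumJ n (J : {set 'I_n}) s :
  \sum_(i in J) count_mem (val i).+1 s = count (mem [seq (val i).+1 | i <- enum J]) s.
Proof.
by rewrite count_memV ?big_map ?big_enum // map_inj_uniq ?enum_uniq // => x y [] /val_inj.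
Qed.

Lemma sizeJ n (J : {set 'I_n}) : size [seq (val i).+1 | i <- enum J] = #|J|.
Proof. by rewrite size_map cardE. Qed.

Lemma uniqJ n (J : {set 'I_n}) : uniq [seq (val i).+1 | i <- enum J].
Proof. by rewrite map_inj_uniq ?enum_uniq // => x y [] /val_inj. Qed.

Lemma cnt_pm n U a : cnt n U = pm n a ->
  forall i : 'I_n, count_mem i.+1 (flatten U) = nth 0 (pad n a) i.
Proof. by move=> e i; have := congr1 (fun m : 'X_{1..n} => m i) e; rewrite /= !mnmE. Qed.

Lemma top_bound n k T sh : fill_ok n sh T -> coldist sh T ->
  forall (J : {set 'I_n}), #|J| <= k ->
  \sum_(i in J) count_mem (val i).+1 (flatten T) <= top k sh.
Proof.
move=> fo cd J hJ; rewrite sumJ.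
apply: colbound; [exact: fill_size fo| |exact: cd|exact: uniqJ|by rewrite sizeJ].
by move=> i hi; have [] := fill_row fo hi.
Qed.

Lemma pad_inj n a b : is_composition a -> is_composition b -> pad n a = pad n b -> a = b.
Proof.
move=> ca cb e.
have f : forall c, is_composition c -> filter (fun x => 0 < x) (pad n c) = c.
  move=> c cc; rewrite filter_cat (_ : filter _ (nseq _ 0) = [::]); last by elim: (n - size c).
  by rewrite /= (all_filterP cc).
by rewrite -(f a ca) -(f b cb) e.
Qed.

Lemma contrib n a b U : is_composition a -> size a <= n -> is_composition b -> size b <= n ->
  U \in fillings n b -> is_ct b U -> cnt n U = pm n a ->
  [/\ forall k, top k a <= top k b, key n a <= key n b & (key n a = key n b -> a = b)].
Proof.
move=> ca ha cb hb; rewrite mem_fillings => fo hct e.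
have ec := cnt_pm e.
have okU := fill_flat fo.
have okC := fill_flat (Can_fill hb).
have [le eqimp] := ct_sum cb hb fo hct.
have kaU : key n a = sumn (flatten U).
  by rewrite (sumn_key okU) /key; apply: eq_bigr => i _; rewrite ec.
have kbC : key n b = sumn (flatten (Can n b)).
  by rewrite (sumn_key okC) /key; apply: eq_bigr => i _; rewrite cnt_Can.
split.
- move=> k; rewrite -(top_pad k (n - size a)) -/(pad n a).
  case: (top_att k (size_pad ha)) => J [hJ <-].
  rewrite (eq_bigr (fun i : 'I_n => count_mem (val i).+1 (flatten U))); last by move=> i _; rewrite ec.
  apply: (top_bound fo _ hJ); exact: ct_coldist fo hct.
- by rewrite kaU kbC.
move=> h; have eU := eqimp (ltac:(by rewrite -kaU -kbC h)).
apply: (@pad_inj n _ _ ca cb); apply: (@eq_from_nth _ 0); first by rewrite !size_pad.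
move=> i; rewrite size_pad // => hi.
by rewrite -(ec (Ordinal hi)) /= eU cnt_Can.
Qed.

Local Open Scope ring_scope.

Lemma prod_zero n lam beta a : is_partition lam -> (size a <= n)%N ->
  (exists k, (top k (phi lam beta) < top k a)%N) ->
  (schur n lam * qschur n beta)@_(pm n a) = 0.
Proof.
move=> /andP[_ slam] ha [k hk].
rewrite mcoeff_prod big1_seq // => T /andP[hT]; rewrite mem_fillings => foT.
rewrite big1_seq // => U /andP[hU]; rewrite mem_fillings => foU.
case: eqP => // e; exfalso.
have ec : forall i : 'I_n, (count_mem (val i).+1 (flatten T) + count_mem (val i).+1 (flatten U))%N = nth 0 (pad n a) i.
  move=> i; have := congr1 (fun m : 'X_{1..n} => m i) e.
  by rewrite /= mnmDE !mnmE.
case: (top_att k (size_pad ha)) => J [hJ eJ].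
have h1 := top_bound foT (ssyt_coldist slam foT hT) hJ.
have h2 := top_bound foU (ct_coldist foU hU) hJ.
have h3 : (\sum_(i in J) nth 0 (pad n a) i = \sum_(i in J) count_mem (val i).+1 (flatten T)
   + \sum_(i in J) count_mem (val i).+1 (flatten U))%N.
  by rewrite -big_split; apply: eq_bigr => i _; exact: (esym (ec i)).
have h4 := phi_top lam beta k.
move: hk; rewrite -(top_pad k (n - size a) a) -/(pad n a) -eJ h3; rewrite (top_sorted _ slam) in h1.
move=> hlt; have h5 := leq_trans (leq_add h1 h2) h4; have := leq_ltn_trans h5 hlt; by rewrite ltnn.
Qed.

End M11.
Import M11.

Module M12.
Import GRing.Theory Num.Theory.
Local Open Scope ring_scope.

Lemma sort_dec_idem s : sort_dec (sort_dec s) = sort_dec s.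
Proof. by rewrite /sort_dec sorted_sort //; [exact: geq_trans | apply: sort_sorted; exact: geq_total]. Qed.

Lemma Can_count n a : is_composition a -> (size a <= n)%N ->
  (0 < count (fun U => is_ct a U && (cnt n U == pm n a)) (fillings n a))%N.
Proof.
move=> ca ha; rewrite -has_count; apply/hasP; exists (Can n a).
  by rewrite mem_fillings; apply: Can_fill.
rewrite Can_ct //=; apply/eqP/mnmP => i; rewrite !mnmE cnt_Can //.
Qed.


End M12.
Import M12.

Unset Implicit Arguments.
Import GRing.Theory Num.Theory.
Local Open Scope ring_scope.

Theorem theorem5p5 (n d : nat) (lam beta alpha : seq nat) :
  (1 <= n)%N ->
  is_partition lam -> in_Bn n beta ->
  (size lam <= n)%N -> (size beta <= n)%N ->
  (sumn lam + sumn beta)%N = d ->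
  is_composition alpha -> sumn alpha = d -> (size alpha <= n)%N ->
  ~ dominates (sort_dec (phi lam beta)) (sort_dec alpha) ->
  forall c : seq nat -> rat,
    schur n lam * qschur n beta = \sum_(a <- comps_upto n d) c a *: qschur n a ->
    c alpha = 0.
Proof.
move=> hn hlam hB hsl hsb hd hca hsa hsza hnd c hE.
set L := comps_upto n d.
pose W a := (\sum_(k < n.+1) top k a)%N.
pose Wm := (\max_(b <- L) W b)%N.
pose Km := (\max_(b <- L) key n b)%N.
pose mu a := ((Wm - W a) * Km.+1 + (Km - key n a))%N.
pose Nb b a := count (fun U => is_ct b U && (cnt n U == pm n a)) (fillings n b).
have main : forall v a, mu a = v -> a \in L ->
    (exists k, (top k (phi lam beta) < top k a)%N) -> c a = 0.
  elim/ltn_ind => v IH a hv hL hbad.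
  have [ca sa za] := comps_mem hL.
  have := congr1 (mcoeff (pm n a)) hE.
  rewrite prod_zero // mcoeff_sum.
  under eq_bigr do rewrite mcoeffZ mcoeff_q.
  have hz : forall b, b \in L -> c b * (Nb b a)%:R = (b == a)%:R * (c a * (Nb a a)%:R).
    move=> b hb; case: (b =P a) => [->|hne]; first by rewrite mul1r.
    rewrite mul0r; case: (Nb b a =P 0%N) => [->|hN]; first by rewrite mulr0.
    have : has (fun U => is_ct b U && (cnt n U == pm n a)) (fillings n b).
      by rewrite has_count lt0n; apply/eqP.
    case/hasP => U hU /andP[hct /eqP he].
    have [cb sb zb] := comps_mem hb.
    have [htop hkey heq] := contrib ca za cb zb hU hct he.
    have hbadb : exists k, (top k (phi lam beta) < top k b)%N.
      by case: hbad => k hk; exists k; apply: leq_trans hk (htop k).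
    have hW : (W a <= W b)%N by apply: leq_sum => k _; apply: htop.
    have hk : (key n a < key n b)%N.
      rewrite ltn_neqAle hkey andbT; apply/eqP => e; exact: hne (esym (heq e)).
    have b1 : (W b <= Wm)%N by apply: (@leq_bigmax_seq _ _ xpredT W).
    have b2 : (key n b <= Km)%N by apply: (@leq_bigmax_seq _ _ xpredT (key n)).
    have b3 : (W a <= Wm)%N by apply: (@leq_bigmax_seq _ _ xpredT W).
    have b4 : (key n a <= Km)%N by apply: (@leq_bigmax_seq _ _ xpredT (key n)).
    have hmu : (mu b < v)%N.
      rewrite -hv /mu.
      have : ((Wm - W b) * Km.+1 <= (Wm - W a) * Km.+1)%N by apply: leq_mul => //; lia.
      lia.
    by rewrite (IH _ hmu b erefl hb hbadb) mul0r.
  rewrite (eq_big_seq _ hz) -mulr_suml -natr_sum.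
  have -> : (\sum_(b <- L) (b == a : nat))%N = count_mem a L.
    by rewrite -sum1_count [RHS]big_mkcond /=; apply: eq_bigr => b _; case: (_ == _).
  move/esym/eqP; rewrite !mulf_eq0 !pnatr_eq0 => /orP[|/orP[/eqP //|]].
    by rewrite -leqn0 leqNgt -has_count has_pred1 hL.
  by rewrite -leqn0 leqNgt (Can_count ca za).
case: (c alpha =P 0) => // hne; exfalso; apply: hnd => k.
case: leqP => // hlt; exfalso; apply: hne.
exact: (main (mu alpha) alpha erefl (mem_comps hca hsa hsza) (ex_intro _ k hlt)).
Qed.
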